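(* Let $n$ be even, $1\le\kappa<n$ and $d\ge1$. Let $\mathcal{C}_1\subseteq\{0,1\}^n$ be a balanced binary code of length $n$ with minimum Hamming distance $d$ and of maximum size among such codes, and let $\mathcal{C}_2\subseteq\{0,1\}^n$ be a binary $\kappa$-WMU code of length $n$ with minimum Hamming distance $d$. Let $\mathcal{C}=\{\Psi(\mathbf{a},\mathbf{b}):\mathbf{a}\in\mathcal{C}_1,\mathbf{b}\in\mathcal{C}_2\}\subseteq\{\mathtt{A},\mathtt{T},\mathtt{C},\mathtt{G}\}^n$. Then $\mathcal{C}$ is a $\kappa$-WMU code, $\mathcal{C}$ is balanced, and the minimum Hamming distance of $\mathcal{C}$ is at least $d$.
   Context: $\Psi(\mathbf{a},\mathbf{b})=(c_1,\dots,c_n)$ with $c_i=\mathtt{A},\mathtt{T},\mathtt{C},\mathtt{G}$ according as $(a_i,b_i)=(0,0),(0,1),(1,0),(1,1)$. A binary sequence of length $n$ is balanced if exactly $n/2$ entries are $1$; a DNA sequence of length $n$ is balanced if exactly $n/2$ entries lie in $\{\mathtt{G},\mathtt{C}\}$; a code is balanced if every codeword is. A code $\mathcal{C}$ of length $n$ is $\kappa$-WMU if for all not necessarily distinct $\mathbf{a},\mathbf{b}\in\mathcal{C}$ and all $\kappa\le l<n$, $(a_1,\dots,a_l)\ne(b_{n-l+1},\dots,b_n)$. *)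

(* Defs.v *)
From HB Require Import structures.
From mathcomp Require Import all_boot.
Set Implicit Arguments. Unset Strict Implicit. Unset Printing Implicit Defensive.

Inductive nt := A | T | C | G.

Definition nt_to (x : nt) : bool * bool :=
  match x with A => (false, false) | T => (false, true)
             | C => (true, false) | G => (true, true) end.
Definition nt_of (p : bool * bool) : nt :=
  match p with (false, false) => A | (false, true) => T
             | (true, false) => C | (true, true) => G end.
Lemma nt_toK : cancel nt_to nt_of. Proof. by case. Qed.
HB.instance Definition _ := Finite.copy nt (can_type nt_toK).

Definition psi1 (a b : bool) : nt :=
  match a, b with false, false => A | false, true => T
                | true, false => C | true, true => G end.
Definition Psi n (a b : n.-tuple bool) : n.-tuple nt :=
  [tuple psi1 (tnth a i) (tnth b i) | i < n].

Definition hamming (X : eqType) n (x y : n.-tuple X) : nat :=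
  count (fun p => p.1 != p.2) (zip x y).

Definition min_dist_ge (X : finType) n (Cd : {set n.-tuple X}) (d : nat) : Prop :=
  forall x y, x \in Cd -> y \in Cd -> x != y -> d <= hamming x y.

Definition bin_balanced n (x : n.-tuple bool) : bool := count id x == n %/ 2.
Definition bin_balanced_code n (Cd : {set n.-tuple bool}) : Prop :=
  forall x, x \in Cd -> bin_balanced x.

Definition dna_balanced n (x : n.-tuple nt) : bool :=
  count (fun c => (c == G) || (c == C)) x == n %/ 2.
Definition dna_balanced_code n (Cd : {set n.-tuple nt}) : Prop :=
  forall x, x \in Cd -> dna_balanced x.

Definition WMU (X : finType) n (kappa : nat) (Cd : {set n.-tuple X}) : Prop :=
  forall a b, a \in Cd -> b \in Cd -> forall l, kappa <= l < n ->
    take l a != drop (n - l) b.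

(* Main.v *)
Require Import Defs.
From HB Require Import structures.
From mathcomp Require Import all_boot.
Set Implicit Arguments.

Lemma Psi_fst n (a b : n.-tuple bool) :
  map (fun c => (nt_to c).1) (Psi a b) = a.
Proof.
have -> : map (fun c => (nt_to c).1) (Psi a b) = map_tuple (fun c => (nt_to c).1) (Psi a b) by [].
congr val; apply: eq_from_tnth => i.
by rewrite tnth_map tnth_mktuple; case: (tnth a i); case: (tnth b i).
Qed.

Lemma Psi_snd n (a b : n.-tuple bool) :
  map (fun c => (nt_to c).2) (Psi a b) = b.
Proof.
have -> : map (fun c => (nt_to c).2) (Psi a b) = map_tuple (fun c => (nt_to c).2) (Psi a b) by [].
congr val; apply: eq_from_tnth => i.
by rewrite tnth_map tnth_mktuple; case: (tnth a i); case: (tnth b i).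
Qed.

Lemma ham_map (X Y : eqType) (f : X -> Y) (s t : seq X) :
  count (fun p => p.1 != p.2) (zip (map f s) (map f t))
  <= count (fun p => p.1 != p.2) (zip s t).
Proof.
elim: s t => [|x s IH] [|y t] //=.
apply: leq_add; last exact: IH.
by case: (eqVneq x y) => [->|]; rewrite ?eqxx // leq_b1.
Qed.

Lemma ham_fst n (a b a' b' : n.-tuple bool) :
  hamming a a' <= hamming (Psi a b) (Psi a' b').
Proof.
rewrite /hamming.
have -> : zip a a' = zip (map (fun c => (nt_to c).1) (Psi a b)) (map (fun c => (nt_to c).1) (Psi a' b')) by rewrite !Psi_fst.
exact: ham_map.
Qed.

Lemma ham_snd n (a b a' b' : n.-tuple bool) :
  hamming b b' <= hamming (Psi a b) (Psi a' b').
Proof.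
rewrite /hamming.
have -> : zip b b' = zip (map (fun c => (nt_to c).2) (Psi a b)) (map (fun c => (nt_to c).2) (Psi a' b')) by rewrite !Psi_snd.
exact: ham_map.
Qed.

Lemma count_Psi n (a b : n.-tuple bool) :
  count (fun c => (c == G) || (c == C)) (Psi a b) = count id a.
Proof.
rewrite -[in RHS](Psi_fst a b) count_map; apply: eq_count => c.
by case: c.
Qed.

Theorem lemma6 (n kappa d : nat) (C1 C2 : {set n.-tuple bool}) :
  ~~ odd n -> 1 <= kappa < n -> 1 <= d ->
  bin_balanced_code C1 -> min_dist_ge C1 d ->
  (forall C' : {set n.-tuple bool},
      bin_balanced_code C' -> min_dist_ge C' d -> #|C'| <= #|C1|) ->
  WMU kappa C2 -> min_dist_ge C2 d ->
  let Cd := [set Psi a b | a in C1, b in C2] in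
  [/\ WMU kappa Cd, dna_balanced_code Cd & min_dist_ge Cd d].
Proof.
move=> _ _ _ bal1 md1 _ w2 md2 Cd; split.
- move=> x y /imset2P [a b _ b2 ->] /imset2P [a' b' _ b2' ->] l hl.
  apply/negP => /eqP E.
  have := w2 _ _ b2 b2' l hl; rewrite -(Psi_snd a b) -(Psi_snd a' b').
  by rewrite -map_take -map_drop E eqxx.
- move=> x /imset2P [a b a1 _ ->].
  by rewrite /dna_balanced count_Psi; exact: bal1.
- move=> x y /imset2P [a b a1 b2 ->] /imset2P [a' b' a1' b2' ->] ne.
  case: (eqVneq a a') => [ea|na].
  + subst a'; have nb : b != b' by apply: contraNneq ne => ->.
    exact: leq_trans (md2 _ _ b2 b2' nb) (ham_snd _ _ _ _).
  + exact: leq_trans (md1 _ _ a1 a1' na) (ham_fst _ _ _ _).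
Qed.
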